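(* Let $\ell\ge 2$ and let $G$ be a bipartite graph with an edge $uv\in E(G)$. Suppose $G$ has $\ell$ pairwise vertex-disjoint edges $w_iz_i$ ($1\le i\le \ell$) such that $w_1,\dots,w_\ell\in N(v)\setminus\{u\}$, $z_1,\dots,z_\ell\in N(u)\setminus\{v\}$, and $(w_{i-1},z_{i-1},w_i,z_i)$ is rich for every $2\le i\le\ell$. Then $G$ contains a copy of $C_{2\ell}^{\square}$.
   Context: For distinct vertices $w,z,w',z'$ of $G$, the $4$-tuple $(w,z,w',z')$ is rich if $wz,w'z'\in E(G)$ and there are at least $4\ell$ pairwise vertex-disjoint edges $xy\in E(G)$ with $wx,xw',zy,yz'\in E(G)$. $N(v)$ is the neighbourhood of $v$. $C_{2\ell}^{\square}$ consists of two vertex-disjoint $2\ell$-cycles $a_1\cdots a_{2\ell}a_1$, $b_1\cdots b_{2\ell}b_1$ plus the edges $a_ib_i$. *)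

(* Defs.v *)
From mathcomp Require Import all_boot.
Set Implicit Arguments. Unset Strict Implicit. Unset Printing Implicit Defensive.

Definition simple_graph (T : finType) (e : rel T) : Prop :=
  symmetric e /\ irreflexive e.

Definition bipartite (T : finType) (e : rel T) : Prop :=
  exists c : T -> bool, forall x y, e x y -> c x != c y.

Definition vdisjoint_edges (T : finType) (M : {set T * T}) : Prop :=
  forall p q, p \in M -> q \in M -> p != q ->
    [/\ p.1 != q.1, p.1 != q.2, p.2 != q.1 & p.2 != q.2].

Definition rich (T : finType) (e : rel T) (l : nat) (w z w' z' : T) : Prop :=
  uniq [:: w; z; w'; z'] /\ e w z /\ e w' z' /\
  exists M : {set T * T},
    [/\ 4 * l <= #|M|, vdisjoint_edges M &
        forall p, p \in M ->
          [/\ e p.1 p.2, e w p.1, e p.1 w', e z p.2 & e p.2 z']].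

(* G contains a copy of C_{2l}^square: vertices a_1..a_{2l}, b_1..b_{2l},
   all distinct, cycles a_1...a_{2l}a_1 and b_1...b_{2l}b_1, and edges a_i b_i. *)
Definition has_prism (T : finType) (e : rel T) (l : nat) : Prop :=
  exists a b : nat -> T,
    [/\ (forall i j, 1 <= i <= 2 * l -> 1 <= j <= 2 * l ->
           [/\ a i = a j -> i = j, b i = b j -> i = j & a i != b j]),
        (forall i, 1 <= i < 2 * l -> e (a i) (a i.+1) /\ e (b i) (b i.+1)),
        e (a (2 * l)) (a 1), e (b (2 * l)) (b 1) &
        (forall i, 1 <= i <= 2 * l -> e (a i) (b i))].

(* Main.v *)
Require Import Defs.
From mathcomp Require Import all_boot zify.

Lemma half2 i : (2 * i)./2 = i.
Proof. by elim: i => // i IH; rewrite mulnS addSn addSn /= IH. Qed.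
Lemma half21 i : (2 * i + 1)./2 = i.
Proof. by elim: i => // i IH; rewrite mulnS addSn addSn /= IH. Qed.
Lemma odd2 i : odd (2 * i) = false.
Proof. by rewrite mul2n odd_double. Qed.
Lemma odd21 i : odd (2 * i + 1).
Proof. by rewrite addn1 /= odd2. Qed.

Lemma decomp l n : 1 <= n <= 2 * l ->
  n = 1 \/ (exists2 i, 1 <= i <= l & n = 2 * i) \/ (exists2 i, 1 <= i < l & n = 2 * i + 1).
Proof.
move=> hn; have := odd_double_half n; rewrite -mul2n.
case: (odd n) => /= H.
- case: (n./2 =P 0) => h0; first by left; lia.
  by right; right; exists n./2; lia.
- by right; left; exists n./2; lia.
Qed.

Lemma pick_avoid (T : finType) (M : {set T * T}) (s : seq T) :
  vdisjoint_edges M -> size s < #|M| ->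
  exists2 p, p \in M & (p.1 \notin s) && (p.2 \notin s).
Proof.
move=> dM hs.
set B := [set p in M | (p.1 \in s) || (p.2 \in s)].
have hB : #|B| <= size s.
  pose f (p : T * T) := if p.1 \in s then p.1 else p.2.
  have inj : {in B &, injective f}.
    move=> p q; rewrite !inE => /andP[pM ps] /andP[qM qs] fpq.
    apply/eqP; apply/negPn/negP => npq.
    have [h1 h2 h3 h4] := dM p q pM qM npq.
    move: fpq; rewrite /f; case: ifP => _; case: ifP => _ H.
    + by move: h1; rewrite H eqxx.
    + by move: h2; rewrite H eqxx.
    + by move: h3; rewrite H eqxx.
    + by move: h4; rewrite H eqxx.
  rewrite -(card_in_imset inj).
  apply: leq_trans (card_size s).
  apply: subset_leq_card; apply/subsetP => t /imsetP[p]; rewrite inE => /andP[_ ps] ->.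
  by rewrite /f; case: ifP => // /negbT h; move: ps; rewrite (negbTE h).
have : ~~ (M \subset B).
  apply/negP => /subset_leq_card; lia.
case/subsetPn => p pM; rewrite inE pM /= negb_or => h.
by exists p.
Qed.

Theorem lemma5p5 (T : finType) (e : rel T) (l : nat) (u v : T)
  (w z : nat -> T) :
  simple_graph e -> bipartite e -> 2 <= l -> e u v ->
  (forall i, 1 <= i <= l -> e (w i) (z i)) ->
  (forall i j, 1 <= i <= l -> 1 <= j <= l -> i != j ->
     [/\ w i != w j, w i != z j, z i != w j & z i != z j]) ->
  (forall i, 1 <= i <= l -> e v (w i) /\ w i != u) ->
  (forall i, 1 <= i <= l -> e u (z i) /\ z i != v) ->
  (forall i, 2 <= i <= l -> rich e l (w i.-1) (z i.-1) (w i) (z i)) ->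
  has_prism e l.
Proof.
move=> [sym irr] _ hl euv ewz dwz hv hu hrich.
set s0 := u :: v :: map w (iota 1 l) ++ map z (iota 1 l).
pose Inv (x y : nat -> T) k := forall i, 1 <= i <= k ->
  [/\ [/\ e (x i) (y i), e (w i) (x i), e (x i) (w i.+1), e (z i) (y i) & e (y i) (z i.+1)],
      (x i \notin s0) && (y i \notin s0) &
      forall j, 1 <= j < i -> (x i \notin [:: x j; y j]) && (y i \notin [:: x j; y j])].
have build : forall k, k <= l.-1 -> exists x, exists y, Inv x y k.
  elim=> [|k IH] hk.
    by exists (fun _ => u), (fun _ => u) => i; lia.
  have [x [y Hxy]] := IH (ltnW hk).
  set s := s0 ++ map x (iota 1 k) ++ map y (iota 1 k).
  have [_ [_ [_ [M [cM dM pM]]]]] := hrich k.+2 ltac:(lia).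
  have hs : size s < #|M|.
    apply: leq_trans cM; rewrite /s /s0 /= !size_cat !size_map !size_iota; lia.
  have [p pin /andP[p1 p2]] := @pick_avoid _ M s dM hs.
  have [ep ew1 ew2 ez1 ez2] := pM p pin.
  exists (fun i => if i == k.+1 then p.1 else x i), (fun i => if i == k.+1 then p.2 else y i).
  move=> i hi; case: eqP => [->|ne].
  - split.
    + by split.
    + by move: p1 p2; rewrite /s !mem_cat !negb_or => /andP[-> _] /andP[-> _].
    + move=> j hj; have -> : (j == k.+1) = false by lia.
      have xj : x j \in s by rewrite /s !mem_cat (map_f x) ?orbT // mem_iota; lia.
      have yj : y j \in s by rewrite /s !mem_cat (map_f y) ?orbT // mem_iota; lia.
      rewrite !inE !negb_or; repeat (apply/andP; split).
      * by apply: contraNneq p1 => ->.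
      * by apply: contraNneq p1 => ->.
      * by apply: contraNneq p2 => ->.
      * by apply: contraNneq p2 => ->.
  - have hi' : 1 <= i <= k by lia.
    have [A B C] := Hxy i hi'; split => // j hj.
    have -> : (j == k.+1) = false by lia.
    exact: C.
have [x [y Inv0]] := build l.-1 (leqnn _).
have eneq : forall a b, e a b -> a != b.
  by move=> a b; apply: contraTneq => ->; rewrite irr.
have ws0 : forall j, 1 <= j <= l -> w j \in s0.
  by move=> j hj; rewrite /s0 !inE mem_cat (map_f w) ?orbT // mem_iota; lia.
have zs0 : forall j, 1 <= j <= l -> z j \in s0.
  by move=> j hj; rewrite /s0 !inE mem_cat (map_f z) ?orbT // mem_iota; lia.
have us0 : u \in s0 by rewrite /s0 !inE eqxx.
have vs0 : v \in s0 by rewrite /s0 !inE eqxx ?orbT.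
have xs0 : forall i t, 1 <= i <= l.-1 -> t \in s0 -> x i != t.
  by move=> i t hi ht; have [_ /andP[hx _] _] := Inv0 i hi; apply: contraNneq hx => ->.
have ys0 : forall i t, 1 <= i <= l.-1 -> t \in s0 -> y i != t.
  by move=> i t hi ht; have [_ /andP[_ hy] _] := Inv0 i hi; apply: contraNneq hy => ->.
have exy : forall i, 1 <= i <= l.-1 -> e (x i) (y i) by move=> i hi; have [[]] := Inv0 i hi.
Ltac splitc := repeat match goal with H : is_true (_ && _) |- _ => case/andP: H => ? ? end.
have xyall : forall i j, 1 <= i <= l.-1 -> 1 <= j <= l.-1 -> x i != y j.
  move=> i j hi hj; case: (ltngtP i j) => [ij|ji|->]; last exact: eneq (exy j hj).
  - have [_ _ H] := Inv0 j hj; have := H i ltac:(lia); rewrite !inE !negb_or => ?.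
    by splitc; first [done | rewrite eq_sym].
  - have [_ _ H] := Inv0 i hi; have := H j ltac:(lia); rewrite !inE !negb_or => ?.
    by splitc; first [done | rewrite eq_sym].
have xx : forall i j, 1 <= i <= l.-1 -> 1 <= j <= l.-1 -> i != j -> x i != x j.
  move=> i j hi hj; case: (ltngtP i j) => [ij|ji|->] ne; last by move: ne; rewrite eqxx.
  - have [_ _ H] := Inv0 j hj; have := H i ltac:(lia); rewrite !inE !negb_or => ?.
    by splitc; first [done | rewrite eq_sym].
  - have [_ _ H] := Inv0 i hi; have := H j ltac:(lia); rewrite !inE !negb_or => ?.
    by splitc; first [done | rewrite eq_sym].
have yy : forall i j, 1 <= i <= l.-1 -> 1 <= j <= l.-1 -> i != j -> y i != y j.
  move=> i j hi hj; case: (ltngtP i j) => [ij|ji|->] ne; last by move: ne; rewrite eqxx.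
  - have [_ _ H] := Inv0 j hj; have := H i ltac:(lia); rewrite !inE !negb_or => ?.
    by splitc; first [done | rewrite eq_sym].
  - have [_ _ H] := Inv0 i hi; have := H j ltac:(lia); rewrite !inE !negb_or => ?.
    by splitc; first [done | rewrite eq_sym].
have wz : forall i j, 1 <= i <= l -> 1 <= j <= l -> w i != z j.
  move=> i j hi hj; case: (eqVneq i j) => [->|ne]; first exact: eneq (ewz j hj).
  by case: (dwz i j hi hj ne).
have vw : forall j, 1 <= j <= l -> v != w j by move=> j hj; exact: eneq (hv j hj).1.
have uz : forall j, 1 <= j <= l -> u != z j by move=> j hj; exact: eneq (hu j hj).1.
have uw : forall j, 1 <= j <= l -> u != w j by move=> j hj; rewrite eq_sym; exact: (hv j hj).2.
have vz : forall j, 1 <= j <= l -> v != z j by move=> j hj; rewrite eq_sym; exact: (hu j hj).2.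
have vu : v != u by rewrite eq_sym; exact: eneq euv.
pose a n := if n == 1 then v else if odd n then x n./2 else w n./2.
pose b n := if n == 1 then u else if odd n then y n./2 else z n./2.
have aw : forall i, 1 <= i -> a (2 * i) = w i.
  by move=> i hi; rewrite /a odd2 half2; case: eqP => //; lia.
have ax : forall i, 1 <= i -> a (2 * i + 1) = x i.
  by move=> i hi; rewrite /a odd21 half21; case: eqP => //; lia.
have bz : forall i, 1 <= i -> b (2 * i) = z i.
  by move=> i hi; rewrite /b odd2 half2; case: eqP => //; lia.
have byy : forall i, 1 <= i -> b (2 * i + 1) = y i.
  by move=> i hi; rewrite /b odd21 half21; case: eqP => //; lia.
have ww : forall i j, 1 <= i <= l -> 1 <= j <= l -> i != j -> w i != w j.
  by move=> i j hi hj ne; case: (dwz i j hi hj ne).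
have zz : forall i j, 1 <= i <= l -> 1 <= j <= l -> i != j -> z i != z j.
  by move=> i j hi hj ne; case: (dwz i j hi hj ne).
have a1 : a 1 = v by [].
have b1 : b 1 = u by [].
Ltac side := first [lia | assumption | match goal with H : forall j : nat, is_true (leq 1 j && _) -> is_true (in_mem _ _) |- _ => apply: H; lia end].
Ltac nq := solve [ match goal with H : _ |- _ => apply: H; side end
                 | rewrite eq_sym; match goal with H : _ |- _ => apply: H; side end ].
Ltac eqcase := let H := fresh "H" in intro H; first [ lia | exfalso; revert H; apply/eqP; nq
  | revert H; match goal with |- ?f ?p = ?f ?q -> _ => case: (eqVneq p q) => [->//|?] end;
    intro H; exfalso; revert H; apply/eqP; nq ].
clear build hrich; exists a, b; split.
- move=> i j hi hj.
  have [->|[[i' hi' ->]|[i' hi' ->]]] := @decomp l i hi;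
  have [->|[[j' hj' ->]|[j' hj' ->]]] := @decomp l j hj;
  rewrite ?a1 ?b1 ?aw ?ax ?bz ?byy; try lia;
  (split; [eqcase | eqcase | nq]).
- move=> i hi.
  have D := @decomp l i ltac:(lia); move: hi; case: D => [->|[[i' hi' ->]|[i' hi' ->]]] hi.
  + by rewrite /a /b /=; split; [exact: (hv 1 ltac:(lia)).1 | exact: (hu 1 ltac:(lia)).1].
  + have [[? ? ? ? ?] _ _] := Inv0 i' ltac:(lia).
    have -> : (2 * i').+1 = 2 * i' + 1 by lia.
    by rewrite (aw i') ?(ax i') ?(bz i') ?(byy i') //; lia.
  + have [[? ? ? ? ?] _ _] := Inv0 i' ltac:(lia).
    have -> : (2 * i' + 1).+1 = 2 * i'.+1 by lia.
    by rewrite (aw i'.+1) ?(bz i'.+1) ?(ax i') ?(byy i') //; lia.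
- rewrite (aw l); last lia. rewrite a1 sym; exact: (hv l ltac:(lia)).1.
- rewrite (bz l); last lia. rewrite b1 sym; exact: (hu l ltac:(lia)).1.
- move=> i hi.
  have D := @decomp l i hi; move: hi; case: D => [->|[[i' hi' ->]|[i' hi' ->]]] hi.
  + by rewrite a1 b1 sym.
  + rewrite (aw i'); last lia. rewrite (bz i'); last lia. apply: ewz; lia.
  + rewrite (ax i'); last lia. rewrite (byy i'); last lia. apply: exy; lia.
Qed.
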